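(* Let $C$ be a cancellative monoid and suppose that $IH^0(C)$ is $0$-bisimple. Then $IH^0(C)$ is $F^*$-inverse if and only if the partially ordered set $P_r(C)$ of principal right ideals of $C$ (ordered by inclusion) is a join semilattice.
   Context: For a right cancellative monoid $C$ and $a\in C$, $\rho_a:C\to C$, $x\mapsto xa$, is regarded as a partial bijection of $C$; the inverse hull $IH(C)$ is the inverse submonoid of the symmetric inverse monoid on $C$ generated by all $\rho_a$, and $IH^0(C)=IH(C)\cup\{\emptyset\}$ with the empty map as zero. An inverse monoid with zero is $0$-bisimple if all its nonzero elements are $\mathscr{D}$-related. The natural partial order on an inverse monoid is $a\le b$ iff $a=eb$ for some idempotent $e$; an inverse monoid is $F^*$-inverse if every nonzero element lies beneath a unique maximal element in this order. A join semilattice is a poset in which any two elements have a least upper bound. *)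

(* Defs.v *)
Record cancellative_monoid (C : Type) (mul : C -> C -> C) (one : C) : Prop := {
  cm_assoc : forall x y z, mul x (mul y z) = mul (mul x y) z;
  cm_one_l : forall x, mul one x = x;
  cm_one_r : forall x, mul x one = x;
  cm_cancel_l : forall a x y, mul a x = mul a y -> x = y;
  cm_cancel_r : forall a x y, mul x a = mul y a -> x = y
}.

(* Partial maps of C, represented by their graphs (relations).
   Every element of the inverse hull is a partial bijection. *)
Definition pmap (C : Type) := C -> C -> Prop.

Definition rho {C : Type} (mul : C -> C -> C) (a : C) : pmap C :=
  fun x y => y = mul x a.

(* Product in the symmetric inverse monoid: (f g) = "first f, then g"
   (maps act on the right, so rho_a rho_b = rho_(ab)). *)
Definition pcomp {C : Type} (f g : pmap C) : pmap C :=
  fun x z => exists y, f x y /\ g y z.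

Definition pinv {C : Type} (f : pmap C) : pmap C := fun x y => f y x.

Definition pempty {C : Type} : pmap C := fun _ _ => False.

(* The inverse hull IH(C): inverse submonoid of the symmetric inverse monoid
   generated by all rho_a (the identity is rho_1). *)
Inductive IH {C : Type} (mul : C -> C -> C) : pmap C -> Prop :=
| IH_rho : forall a, IH mul (rho mul a)
| IH_comp : forall f g, IH mul f -> IH mul g -> IH mul (pcomp f g)
| IH_inv : forall f, IH mul f -> IH mul (pinv f).

Definition IH0 {C : Type} (mul : C -> C -> C) (f : pmap C) : Prop :=
  IH mul f \/ f = pempty.

Definition Rrel {C : Type} (S : pmap C -> Prop) (a b : pmap C) : Prop :=
  exists u v, S u /\ S v /\ a = pcomp b u /\ b = pcomp a v.
Definition Lrel {C : Type} (S : pmap C -> Prop) (a b : pmap C) : Prop :=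
  exists u v, S u /\ S v /\ a = pcomp u b /\ b = pcomp v a.
Definition Drel {C : Type} (S : pmap C -> Prop) (a b : pmap C) : Prop :=
  exists c, S c /\ Rrel S a c /\ Lrel S c b.

Definition zero_bisimple {C : Type} (S : pmap C -> Prop) (z : pmap C) : Prop :=
  forall a b, S a -> S b -> a <> z -> b <> z -> Drel S a b.

Definition nat_le {C : Type} (S : pmap C -> Prop) (a b : pmap C) : Prop :=
  exists e, S e /\ pcomp e e = e /\ a = pcomp e b.

Definition maximal {C : Type} (S : pmap C -> Prop) (m : pmap C) : Prop :=
  S m /\ forall x, S x -> nat_le S m x -> x = m.

Definition Fstar_inverse {C : Type} (S : pmap C -> Prop) (z : pmap C) : Prop :=
  forall a, S a -> a <> z ->
    exists m, (maximal S m /\ nat_le S a m) /\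
      forall m', maximal S m' -> nat_le S a m' -> m' = m.

Definition pr_ideal {C : Type} (mul : C -> C -> C) (a : C) : C -> Prop :=
  fun x => exists c, x = mul a c.

Definition subset {C : Type} (A B : C -> Prop) : Prop := forall x, A x -> B x.

Definition Pr_join_semilattice {C : Type} (mul : C -> C -> C) : Prop :=
  forall a b, exists c,
    subset (pr_ideal mul a) (pr_ideal mul c) /\
    subset (pr_ideal mul b) (pr_ideal mul c) /\
    forall d, subset (pr_ideal mul a) (pr_ideal mul d) ->
              subset (pr_ideal mul b) (pr_ideal mul d) ->
              subset (pr_ideal mul c) (pr_ideal mul d).

(* Main.v *)
Require Import Defs.
From Stdlib Require Import FunctionalExtensionality PropExtensionality.

Definition rep {C : Type} (mul : C -> C -> C) (a b : C) : pmap C :=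
  pcomp (pinv (rho mul a)) (rho mul b).

Lemma rel_ext {C : Type} (f g : pmap C) :
  (forall x y, f x y <-> g x y) -> f = g.
Proof.
  intros H. apply functional_extensionality; intro x.
  apply functional_extensionality; intro y.
  apply propositional_extensionality. apply H.
Qed.

Definition Inv {C : Type} (mul : C -> C -> C) (f : pmap C) : Prop :=
  (forall x y y', f x y -> f x y' -> y = y') /\
  (forall x x' y, f x y -> f x' y -> x = x') /\
  (forall z x y, f x y -> f (mul z x) (mul z y)).

Lemma IH_Inv {C : Type} (mul : C -> C -> C) (one : C)
  (HC : cancellative_monoid C mul one) f : IH mul f -> Inv mul f.
Proof.
  induction 1 as [a|f g _ [F1 [I1 M1]] _ [F2 [I2 M2]]|f _ [F1 [I1 M1]]].
  - unfold rho; repeat split.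
    + intros x y y' -> ->; reflexivity.
    + intros x x' y -> E. exact (cm_cancel_r _ _ _ HC a x x' E).
    + intros z x y ->. apply (cm_assoc _ _ _ HC).
  - unfold pcomp; repeat split.
    + intros x y y' [w [H1 H2]] [w' [H1' H2']].
      pose proof (F1 _ _ _ H1 H1'); subst. eauto.
    + intros x x' y [w [H1 H2]] [w' [H1' H2']].
      pose proof (I2 _ _ _ H2 H2'); subst. eauto.
    + intros z x y [w [H1 H2]]. exists (mul z w); auto.
  - unfold pinv; repeat split; eauto.
Qed.

Lemma rep_IH {C : Type} (mul : C -> C -> C) a b : IH mul (rep mul a b).
Proof. unfold rep. apply IH_comp; [apply IH_inv|]; apply IH_rho. Qed.

Lemma rep_self {C : Type} (mul : C -> C -> C) (one : C)
  (HC : cancellative_monoid C mul one) a b : rep mul a b a b.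
Proof.
  exists one; unfold pinv, rho; split; symmetry; apply (cm_one_l _ _ _ HC).
Qed.

Lemma rep_nz {C : Type} (mul : C -> C -> C) (one : C)
  (HC : cancellative_monoid C mul one) a b : rep mul a b <> pempty.
Proof.
  intro E. pose proof (rep_self mul one HC a b) as H. rewrite E in H. exact H.
Qed.

Lemma rep_eq_inv {C : Type} (mul : C -> C -> C) (one : C)
  (HC : cancellative_monoid C mul one) a b c d :
  rep mul a b = rep mul c d -> exists s, a = mul s c /\ b = mul s d.
Proof.
  intro E. pose proof (rep_self mul one HC a b) as H. rewrite E in H.
  destruct H as [s [H1 H2]]. exists s. unfold pinv, rho in *. auto.
Qed.

Lemma unit_comm {C : Type} (mul : C -> C -> C) (one : C)
  (HC : cancellative_monoid C mul one) w t : mul w t = one -> mul t w = one.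
Proof.
  intro E. apply (cm_cancel_l _ _ _ HC w).
  rewrite (cm_assoc _ _ _ HC), E, (cm_one_l _ _ _ HC), (cm_one_r _ _ _ HC).
  reflexivity.
Qed.

Lemma nonzero_rep {C : Type} (mul : C -> C -> C) (one : C)
  (HC : cancellative_monoid C mul one)
  (Hbis : zero_bisimple (IH0 mul) pempty) f :
  IH0 mul f -> f <> pempty -> exists a b, f = rep mul a b.
Proof.
  intros Sf nz.
  assert (Hid : IH0 mul (rho mul one)) by (left; apply IH_rho).
  assert (nzid : rho mul one <> pempty).
  { intro E. assert (H : rho mul one one one).
    { unfold rho. symmetry; apply (cm_one_l _ _ _ HC). }
    rewrite E in H; exact H. }
  destruct (Hbis f _ Sf Hid nz nzid) as [c [Sc [[u [v [_ [_ [Ef Ec]]]]]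
      [u' [v' [_ [_ [Ec' Eid]]]]]]]].
  assert (tot : forall x, exists y, c y x).
  { intro x. assert (H : rho mul one x x).
    { unfold rho. symmetry; apply (cm_one_r _ _ _ HC). }
    rewrite Eid in H. destruct H as [y [_ H]]. eauto. }
  assert (cIH : IH mul c).
  { destruct Sc as [Sc|Sc]; auto. exfalso. destruct (tot one) as [y H].
    rewrite Sc in H; exact H. }
  assert (fIH : IH mul f) by (destruct Sf; tauto).
  destruct (IH_Inv mul one HC c cIH) as [Fc [Ic Mc]].
  destruct (IH_Inv mul one HC f fIH) as [Ff [If Mf]].
  destruct (tot one) as [a Ha].
  assert (dcf : forall x w, c x w -> exists y, f x y).
  { intros x w H. rewrite Ec in H. destruct H as [y [H _]]. eauto. }
  assert (dfc : forall x y, f x y -> exists w, c x w).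
  { intros x y H. rewrite Ef in H. destruct H as [w [H _]]. eauto. }
  destruct (dcf _ _ Ha) as [b Hb].
  exists a, b. apply rel_ext; intros x y; split.
  - intro H. destruct (dfc _ _ H) as [w Hw].
    pose proof (Mc w _ _ Ha) as Hw'. rewrite (cm_one_r _ _ _ HC) in Hw'.
    pose proof (Ic _ _ _ Hw Hw'); subst x.
    pose proof (Mf w _ _ Hb) as Hb'.
    pose proof (Ff _ _ _ H Hb'); subst y.
    exists w; unfold pinv, rho; auto.
  - intros [t [H1 H2]]. unfold pinv, rho in *. subst. auto.
Qed.

Lemma le_rep {C : Type} (mul : C -> C -> C) (one : C)
  (HC : cancellative_monoid C mul one) a b c d :
  nat_le (IH0 mul) (rep mul a b) (rep mul c d) <->
  exists u, a = mul u c /\ b = mul u d.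
Proof.
  split.
  - intros [e [Se [Ee Ef]]].
    pose proof (rep_self mul one HC a b) as H. rewrite Ef in H.
    destruct H as [y [Hey [t [H1 H2]]]]. unfold pinv, rho in H1, H2.
    assert (eIH : IH mul e).
    { destruct Se as [Se|Se]; auto. rewrite Se in Hey; destruct Hey. }
    destruct (IH_Inv mul one HC e eIH) as [Fe [Ie _]].
    assert (Hyy : e y y).
    { pose proof Hey as H. rewrite <- Ee in H. destruct H as [w [H3 H4]].
      pose proof (Fe _ _ _ Hey H3); subst w. exact H4. }
    pose proof (Ie _ _ _ Hey Hyy); subst y.
    exists t; auto.
  - intros [u [Ha Hb]]. exists (rep mul a a). split; [left; apply rep_IH|].
    split.
    + apply rel_ext; intros x z; split.
      * intros [y [[t [H1 H2]] [s [H3 H4]]]]. unfold pinv, rho in *.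
        exists t; unfold pinv, rho; split; congruence.
      * intros H. exists z; split; auto.
        destruct H as [t [H1 H2]]; unfold pinv, rho in *.
        exists t; split; congruence.
    + apply rel_ext; intros x z; split.
      * intros [t [H1 H2]]; unfold pinv, rho in *.
        exists x; split.
        -- exists t; unfold pinv, rho; split; auto.
        -- exists (mul t u); unfold pinv, rho.
           rewrite <- !(cm_assoc _ _ _ HC), <- Ha, <- Hb. auto.
      * intros [w [[t [H1 H2]] [s [H3 H4]]]]; unfold pinv, rho in *.
        exists t; unfold pinv, rho; split; auto.
        subst x z w. rewrite Ha, (cm_assoc _ _ _ HC) in H3.
        apply (cm_cancel_r _ _ _ HC) in H3. subst s.
        rewrite Hb, (cm_assoc _ _ _ HC). reflexivity.
Qed.

Lemma le_nz {C : Type} (mul : C -> C -> C) f m :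
  nat_le (IH0 mul) f m -> f <> pempty -> m <> pempty.
Proof.
  intros [e [_ [_ E]]] nz Em. apply nz. rewrite E, Em.
  apply rel_ext; intros x y; split.
  - intros [w [_ H]]; exact H.
  - intros H; destruct H.
Qed.

Theorem proposition4p2 (C : Type) (mul : C -> C -> C) (one : C)
  (HC : cancellative_monoid C mul one)
  (Hbis : zero_bisimple (IH0 mul) pempty) :
  Fstar_inverse (IH0 mul) pempty <-> Pr_join_semilattice mul.
Proof.
  pose proof (cm_assoc _ _ _ HC) as As.
  pose proof (cm_one_r _ _ _ HC) as O1.
  split.
  - intros HF a b.
    destruct (HF (rep mul a b) (or_introl (rep_IH mul a b)) (rep_nz mul one HC a b))
      as [m [[Mm Lm] Um]].
    assert (mnz : m <> pempty) by exact (le_nz mul _ _ Lm (rep_nz mul one HC a b)).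
    destruct (nonzero_rep mul one HC Hbis m (proj1 Mm) mnz) as [c [d Em]].
    subst m. apply (le_rep mul one HC) in Lm. destruct Lm as [u [Ha Hb]].
    exists u. split; [|split].
    + intros x [y ->]. exists (mul c y). rewrite Ha; auto.
    + intros x [y ->]. exists (mul d y). rewrite Hb; auto.
    + intros v Hav Hbv.
      destruct (Hav a (ex_intro _ one (eq_sym (O1 a)))) as [c' Ea].
      destruct (Hbv b (ex_intro _ one (eq_sym (O1 b)))) as [d' Eb].
      assert (Hg : nat_le (IH0 mul) (rep mul a b) (rep mul c' d'))
        by (apply (le_rep mul one HC); eauto).
      destruct (HF (rep mul c' d') (or_introl (rep_IH mul _ _)) (rep_nz mul one HC _ _))
        as [m' [[Mm' Lm'] _]].
      assert (m'nz : m' <> pempty) by exact (le_nz mul _ _ Lm' (rep_nz mul one HC _ _)).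
      destruct (nonzero_rep mul one HC Hbis m' (proj1 Mm') m'nz) as [c0 [d0 Em']].
      subst m'. apply (le_rep mul one HC) in Lm'. destruct Lm' as [w [Hc' Hd']].
      assert (Hfm : nat_le (IH0 mul) (rep mul a b) (rep mul c0 d0)).
      { apply (le_rep mul one HC). exists (mul v w).
        rewrite <- !As, <- Hc', <- Hd'. auto. }
      pose proof (Um _ Mm' Hfm) as E.
      destruct (rep_eq_inv mul one HC _ _ _ _ E) as [s [E1 E2]].
      assert (Hu : u = mul (mul v w) s).
      { apply (cm_cancel_r _ _ _ HC c). rewrite <- Ha, <- !As, <- E1, <- Hc'. auto. }
      intros x [y ->]. exists (mul (mul w s) y). rewrite Hu, !As. reflexivity.
  - intros HJ f Sf nz.
    destruct (nonzero_rep mul one HC Hbis f Sf nz) as [a [b ->]].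
    destruct (HJ a b) as [u [Hau [Hbu Hmin]]].
    destruct (Hau a (ex_intro _ one (eq_sym (O1 a)))) as [c Ha].
    destruct (Hbu b (ex_intro _ one (eq_sym (O1 b)))) as [d Hb].
    assert (Mm : maximal (IH0 mul) (rep mul c d)).
    { split; [left; apply rep_IH|].
      intros x Sx Lx.
      assert (xnz : x <> pempty) by exact (le_nz mul _ _ Lx (rep_nz mul one HC _ _)).
      destruct (nonzero_rep mul one HC Hbis x Sx xnz) as [c' [d' ->]].
      apply (le_rep mul one HC) in Lx. destruct Lx as [w [Hc Hd]].
      assert (Huw : subset (pr_ideal mul u) (pr_ideal mul (mul u w))).
      { apply Hmin.
        - intros z [y ->]. exists (mul c' y). rewrite Ha, Hc, !As. auto.
        - intros z [y ->]. exists (mul d' y). rewrite Hb, Hd, !As. auto. }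
      destruct (Huw u (ex_intro _ one (eq_sym (O1 u)))) as [t Et].
      assert (Wt : mul w t = one).
      { apply (cm_cancel_l _ _ _ HC u). rewrite As, <- Et, O1. auto. }
      pose proof (unit_comm mul one HC w t Wt) as Tw.
      assert (Hc2 : c' = mul t c) by (rewrite Hc, As, Tw, (cm_one_l _ _ _ HC); auto).
      assert (Hd2 : d' = mul t d) by (rewrite Hd, As, Tw, (cm_one_l _ _ _ HC); auto).
      apply rel_ext; intros x y; split.
      + intros [s [H1 H2]]; unfold pinv, rho in *. exists (mul s t).
        unfold pinv, rho. rewrite <- !As, <- Hc2, <- Hd2. auto.
      + intros [s [H1 H2]]; unfold pinv, rho in *. exists (mul s w).
        unfold pinv, rho. rewrite <- !As, <- Hc, <- Hd. auto. }
    exists (rep mul c d). split.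
    + split; auto. apply (le_rep mul one HC). eauto.
    + intros m' Mm' Lm'.
      assert (m'nz : m' <> pempty) by exact (le_nz mul _ _ Lm' (rep_nz mul one HC _ _)).
      destruct (nonzero_rep mul one HC Hbis m' (proj1 Mm') m'nz) as [c' [d' ->]].
      apply (le_rep mul one HC) in Lm'. destruct Lm' as [v [Ha' Hb']].
      assert (Huv : subset (pr_ideal mul u) (pr_ideal mul v)).
      { apply Hmin.
        - intros z [y ->]. exists (mul c' y). rewrite Ha', As. auto.
        - intros z [y ->]. exists (mul d' y). rewrite Hb', As. auto. }
      destruct (Huv u (ex_intro _ one (eq_sym (O1 u)))) as [s Es].
      assert (Hc' : c' = mul s c).
      { apply (cm_cancel_l _ _ _ HC v). rewrite As, <- Es, <- Ha, <- Ha'. auto. }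
      assert (Hd' : d' = mul s d).
      { apply (cm_cancel_l _ _ _ HC v). rewrite As, <- Es, <- Hb, <- Hb'. auto. }
      symmetry. apply (proj2 Mm'). left; apply rep_IH.
      apply (le_rep mul one HC). eauto.
Qed.
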